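(* Let $p_1(\lambda),\dots,p_k(\lambda)$ be scalar complex polynomials such that their greatest common divisor $q(\lambda)=\gcd(p_1(\lambda),\dots,p_k(\lambda))$ has simple roots. Then there exists a generic set $\Omega\subseteq\mathbb C^k$ such that for all $s=(s_1,\dots,s_k)\in\Omega$ the roots of the polynomial $s_1p_1(\lambda)+\cdots+s_kp_k(\lambda)$ are simple.
   Context: The greatest common divisor of several polynomials is defined recursively via $\gcd(p_1,\dots,p_k)=\gcd(\gcd(p_1,\dots,p_{k-1}),p_k)$, unique up to a nonzero constant. A set $\Omega\subseteq\mathbb C^k$ is generic if its complement is contained in an algebraic set (common zero set of finitely many polynomials) that is not all of $\mathbb C^k$. *)

(* Defs.v *)
(* The complex numbers are modelled as R[i] for an
   arbitrary R : realType (a complete archimedean ordered field, i.e. the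
   reals up to isomorphism), using the complex type of mathcomp-real-closed. *)
From HB Require Import structures.
From mathcomp Require Import all_boot all_order all_algebra.
From mathcomp Require Import reals.
From mathcomp.real_closed Require Import complex.
From mathcomp Require Import mpoly.
Set Implicit Arguments. Unset Strict Implicit. Unset Printing Implicit Defensive.
Import Order.TTheory GRing.Theory Num.Theory.
Local Open Scope ring_scope.

(* gcd(p_1,...,p_k) defined recursively: gcd(gcd(p_1..p_{k-1}), p_k),
   with gcd(p_1) = p_1 (since gcdp 0 p = p).  Unique up to a nonzero constant. *)
Definition gcd_family (F : fieldType) (k : nat) (p : 'I_k -> {poly F}) : {poly F} :=
  foldl (@gcdp F) 0 [seq p i | i <- enum 'I_k].

Definition simple_roots (F : fieldType) (q : {poly F}) : Prop :=
  q != 0 /\ forall x : F, root q x -> mup x q = 1%N.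

Definition in_alg_set (F : comNzRingType) (k : nat) (P : seq {mpoly F[k]})
    (x : 'I_k -> F) : Prop :=
  forall f, f \in P -> mpoly.meval x f = 0.

Definition generic (F : comNzRingType) (k : nat) (Omega : ('I_k -> F) -> Prop) : Prop :=
  exists P : seq {mpoly F[k]},
    (exists x, ~ in_alg_set P x) /\
    (forall s, ~ Omega s -> in_alg_set P s).

(* Main.v *)
Require Import Defs.
From HB Require Import structures.
From mathcomp Require Import all_boot all_order all_algebra.
From mathcomp Require Import ring.
From mathcomp Require Import reals.
From mathcomp.real_closed Require Import complex.
From mathcomp Require Import mpoly.
Import Order.TTheory GRing.Theory Num.Theory.
Local Open Scope ring_scope.

Section Pencil.
Variable F : numClosedFieldType.
Implicit Types (A B H : {poly F}) (x t : F).

Lemma dvd2_root H x :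
  (('X - x%:P) ^+ 2 %| H) = root H x && root H^`() x.
Proof.
apply/idP/idP.
  case/dvdpP=> Q ->; rewrite derivM deriv_exp /= !rootE. rewrite !(hornerXsubC, hornerD, hornerM, hornerMn, horner_exp, derivXsubC, hornerX, hornerN, hornerC) subrr expr1.
  by rewrite !(mul0r, mulr0, addr0, eqxx).
case/andP=> /factor_theorem [Q ->]; rewrite derivM derivXsubC mulr1 rootE.
rewrite hornerD !hornerM hornerXsubC subrr mulr0 add0r => /eqP.
move/eqP/factor_theorem=> [Q2 ->]; by rewrite -mulrA -expr2 dvdp_mull.
Qed.

Lemma le_sum_norm (s : seq F) x : x \in s -> `|x| <= \sum_(y <- s) `|y|.
Proof.
elim: s => // y s IH; rewrite inE big_cons.
case/orP=> [/eqP->|/IH h]; first by rewrite lerDl sumr_ge0 // => z _; apply: normr_ge0.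
by rewrite (le_trans h) // lerDr.
Qed.

Lemma exists_notin (s : seq F) : exists t, t \notin s.
Proof.
pose S := \sum_(y <- s) `|y|.
have S0 : 0 <= S by apply: sumr_ge0 => y _; apply: normr_ge0.
exists (S + 1); apply/negP=> /le_sum_norm; rewrite ger0_norm ?addr_ge0 //.
by rewrite -/S gerDl ler10.
Qed.

Lemma W0_root A B t x : A * B^`() - A^`() * B = 0 -> B.[x] != 0 ->
  (A + t *: B).[x] = 0 -> A + t *: B = 0.
Proof.
move=> W Bx Hx; set H := A + t *: B.
have HW : H * B^`() = H^`() * B.
  apply/eqP; rewrite -subr_eq0; apply/eqP; rewrite /H derivD derivZ -!mul_polyC.
  by rewrite -W; ring.
apply/eqP; apply/negP=> /negP Hn0.
have [m [Q nQ HQ]] := multiplicity_XsubC H x.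
move: nQ; rewrite Hn0 /= => nQ.
case: m HQ => [|m] HQ.
  by move: Hx; rewrite -/H HQ expr0 mulr1 => /eqP; rewrite -rootE (negbTE nQ).
have E : (Q * ('X - x%:P) * B^`()) * ('X - x%:P) ^+ m
     = ((Q^`() * ('X - x%:P) + Q *+ m.+1) * B) * ('X - x%:P) ^+ m.
  have := HW; rewrite HQ derivM deriv_exp derivXsubC mul1r /=.
  move=> HW'; transitivity (Q * ('X - x%:P)^+m.+1 * B^`()); first by rewrite exprS; ring.
  by rewrite HW' exprS; ring.
move/mulIf: E; rewrite expf_neq0 ?polyXsubC_eq0 // => /(_ isT) /(congr1 (horner^~ x)).
rewrite !(hornerXsubC, hornerM, hornerD, hornerMn) subrr mulr0 mul0r mulr0 add0r.
move/esym/eqP; rewrite mulf_eq0 mulrn_eq0 /= (negbTE Bx) orbF.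
by rewrite -rootE (negbTE nQ).
Qed.

Definition rootsof (p : {poly F}) : seq F := sval (closed_field_poly_normal p).

Lemma rootsofP p x : p != 0 -> root p x -> x \in rootsof p.
Proof.
move=> p0; rewrite {1}(svalP (closed_field_poly_normal p)) rootZ ?lead_coef_eq0 //.
by rewrite root_prod_XsubC.
Qed.

Lemma pencil A B : exists bad : seq F, forall t, t \notin bad -> forall x,
  ('X - x%:P) ^+ 2 %| A + t *: B -> ('X - x%:P) ^+ 2 %| A /\ ('X - x%:P) ^+ 2 %| B.
Proof.
set W := A * B^`() - A^`() * B.
exists ([seq - A.[x] / B.[x] | x <- rootsof W] ++
        [seq - A^`().[x] / B^`().[x] | x <- rootsof B] ++ [:: - lead_coef A / lead_coef B]).
move=> t tb x; rewrite !dvd2_root derivD derivZ !rootE hornerD hornerZ hornerD hornerZ.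
rewrite !mem_cat !inE !negb_or in tb; case/and3P: tb => tb1 tb2 tb3.
case/andP; rewrite !addr_eq0 => /eqP eA /eqP eA'.
have [Bx0|Bx] := eqVneq B.[x] 0.
  have [B'x0|B'x] := eqVneq B^`().[x] 0.
    by rewrite eA eA' Bx0 B'x0 !mulr0 oppr0 !eqxx.
  have B0 : B != 0 by apply: contraNneq B'x => ->; rewrite deriv0 horner0.
  have : - A^`().[x] / B^`().[x] \in [seq - A^`().[x] / B^`().[x] | x <- rootsof B].
    by apply: map_f; apply: rootsofP; rewrite // rootE Bx0.
  by move=> H; exfalso; move: H; rewrite eA' opprK mulfK // (negbTE tb2).
have teq : - A.[x] / B.[x] = t by rewrite eA opprK mulfK.
have [W0|Wn0] := eqVneq W 0.
  have := W0_root A B t x W0 Bx; rewrite hornerD hornerZ eA addrC subrr => /(_ erefl).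
  move/eqP; rewrite addr_eq0 => /eqP AE.
  have B0 : B != 0 by apply: contraNneq Bx => ->; rewrite horner0.
  move: tb3; rewrite AE lead_coefN lead_coefZ opprK mulfK ?lead_coef_eq0 //.
  by rewrite eqxx.
have : - A.[x] / B.[x] \in [seq - A.[x] / B.[x] | x <- rootsof W].
  apply: map_f; apply: rootsofP; rewrite // rootE /W !(hornerD, hornerN, hornerM).
  by rewrite eA eA'; apply/eqP; ring.
by rewrite teq (negbTE tb1).
Qed.

Lemma ord_split k (j : 'I_k.+1) :
  (exists j' : 'I_k, j = widen_ord (leqnSn k) j') \/ j = ord_max.
Proof.
case: (ltnP j k) => jk; first by left; exists (Ordinal jk); apply: val_inj.
by right; apply: val_inj => /=; apply/eqP; rewrite eqn_leq jk -ltnS ltn_ord.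
Qed.

Lemma iterate (k : nat) (p : 'I_k -> {poly F}) (n : nat) :
  exists t : 'I_k -> F,
   (forall x, ('X - x%:P) ^+ 2 %| \sum_(j < k) t j *: p j ->
      forall j, ('X - x%:P) ^+ 2 %| p j) /\
   ((exists j, (p j)`_n != 0) -> (\sum_(j < k) t j *: p j)`_n != 0).
Proof.
elim: k p => [|k IH] p.
  by exists (fun _ => 0); split; [move=> x _ [] | case=> -[]].
have [t' [H1 H2]] := IH (fun j => p (widen_ord (leqnSn k) j)).
set h := \sum_(j < k) t' j *: p (widen_ord (leqnSn k) j).
have [bad Hbad] := pencil h (p ord_max).
have [t0 t0n] := exists_notin (- h`_n / (p ord_max)`_n :: bad).
rewrite inE negb_or in t0n; case/andP: t0n => t0n1 t0n2.
pose t (j : 'I_k.+1) := if insub (val j) is Some j' then t' j' else t0.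
have tw : forall j : 'I_k, t (widen_ord (leqnSn k) j) = t' j.
  move=> j; rewrite /t; case: insubP => [j' _ E|]; last by rewrite /= ltn_ord.
  by congr t'; apply: val_inj.
have tm : t ord_max = t0.
  by rewrite /t; case: insubP => //= j' _ E; have := ltn_ord j'; rewrite E ltnn.
have sumE : \sum_(j < k.+1) t j *: p j = h + t0 *: p ord_max.
  by rewrite big_ord_recr /= tm; congr (_ + _); apply: eq_bigr => j _; rewrite tw.
exists t; rewrite sumE; split.
  move=> x Hx j; have [hA hB] := Hbad t0 t0n2 x Hx; have {}hA := H1 x hA.
  by case: (ord_split _ j) => [[j' E]|E]; rewrite E; [apply: hA | apply: hB].
case=> j pj; rewrite coefD coefZ.
have [B0|Bn] := eqVneq (p ord_max)`_n 0.
  rewrite B0 mulr0 addr0; apply: H2.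
  case: (ord_split _ j) => [[j' E]|E]; first by exists j'; rewrite -E.
  by move: pj; rewrite E B0 eqxx.
apply/negP; rewrite addr_eq0 => /eqP E; move/negP: t0n1; apply.
by rewrite E opprK mulfK.
Qed.

Lemma dvdp_foldl_gcd d (acc : {poly F}) s :
  d %| acc -> all (fun q => d %| q) s -> d %| foldl (@gcdp F) acc s.
Proof.
elim: s acc => //= q s IH acc da /andP[dq ds]; apply: IH => //.
by rewrite dvdp_gcd da dq.
Qed.

Lemma dvdp_gcd_family d k (p : 'I_k -> {poly F}) :
  (forall j, d %| p j) -> d %| gcd_family p.
Proof.
move=> H; apply: dvdp_foldl_gcd; first exact: dvdp0.
by apply/allP => q /mapP [j _ ->].
Qed.

Lemma simple_coprime (f : {poly F}) : f != 0 -> coprimep f f^`() -> simple_roots f.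
Proof.
move=> f0 cf; split => // x rx; apply/eqP; rewrite eqn_leq.
rewrite -(XsubC_dvd _ f0) dvdp_XsubCl rx andbT mup_leq // dvd2_root rx /=.
apply/negP => rd.
have : coprimep ('X - x%:P) f^`() by apply: coprimep_dvdr cf; rewrite dvdp_XsubCl.
by rewrite coprimep_sym coprimep_XsubC rd.
Qed.

Lemma gen_map_resultant (aR rR : nzRingType) (f : {rmorphism aR -> rR}) p q :
    size (map_poly f p) = size p -> size (map_poly f q) = size q ->
  f (resultant p q) = resultant (map_poly f p) (map_poly f q).
Proof.
move=> sp sq; rewrite /resultant /Sylvester_mx sp sq.
rewrite -det_map_mx /= map_col_mx; congr (\det (col_mx _ _));
  by apply: map_lin1_mx => v; rewrite map_poly_rV rmorphM /= map_rVpoly.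
Qed.

Lemma coef_neq0_size (P : {poly F}) i : P`_i != 0 -> (i < size P)%N.
Proof. by move=> Pi; rewrite ltnNge; apply: contra Pi => /leq_sizeP ->. Qed.

Theorem main_gen (k : nat) (p : 'I_k -> {poly F}) :
  simple_roots (gcd_family p) ->
  exists Omega : ('I_k -> F) -> Prop,
    generic Omega /\
    forall s : 'I_k -> F, Omega s -> simple_roots (\sum_(j < k) s j *: p j).
Proof.
move=> [g0 gs].
have [j0 pj0] : exists j, p j != 0.
  case: (pickP (fun j => p j != 0)) => [j pj|H]; first by exists j.
  have : 0 %| gcd_family p.
    by apply: dvdp_gcd_family => j; move: (H j) => /negbFE/eqP ->; exact: dvdpp.
  by rewrite dvd0p (negbTE g0).
pose N := \max_(j < k) size (p j).
have kp : (0 < #|'I_k|)%N by apply/card_gt0P; exists j0.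
have [jm Njm] := bigop.eq_bigmax (fun j => size (p j)) kp.
rewrite -/N in Njm.
pose n := N.-1.
have sizeP : forall j, (size (p j) <= N)%N by move=> j; rewrite /N; apply: (@bigop.leq_bigmax _ (fun j => size (p j))).
have NP : (0 < N)%N by apply: leq_trans (sizeP j0); rewrite size_poly_gt0.
have pjm : (p jm)`_n != 0.
  have : p jm != 0 by rewrite -size_poly_gt0 -Njm.
  by rewrite -lead_coef_eq0 /lead_coef /n Njm.
have [t [Ht1 Ht2]] := iterate _ p n.
have Htn := Ht2 (ex_intro _ jm pjm).
pose Fm : {poly {mpoly F[k]}} := \sum_(j < k) 'X_j *: map_poly (fun c => c%:MP) (p j).
pose D := Fm`_n * resultant Fm Fm^`().
pose fs (s : 'I_k -> F) := \sum_(j < k) s j *: p j.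
have EV s : map_poly (meval s) Fm = fs s.
  rewrite /Fm raddf_sum; apply: eq_bigr => j _.
  rewrite /= map_polyZ /= mevalXU -map_poly_comp; congr (_ *: _).
  by apply: map_poly_id => c _ /=; exact: mevalC.
have sizeFs s : (size (fs s) <= N)%N.
  apply/leq_sizeP => i Ni; rewrite coef_sum big1 // => j _.
  by rewrite coefZ (nth_default 0 (leq_trans (sizeP j) Ni)) mulr0.
have sizeFm : (size Fm <= N)%N.
  apply/leq_sizeP => i Ni; rewrite coef_sum big1 // => j _.
  by rewrite coefZ coef_map /= (nth_default 0 (leq_trans (sizeP j) Ni)) raddf0 mulr0.
have mapsize (P : {poly {mpoly F[k]}}) s : (size (map_poly (meval s) P) <= size P)%N.
  by apply/leq_sizeP => i Hi; rewrite coef_map /= nth_default // meval0.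
have ms s : meval s (Fm`_n) = (fs s)`_n by rewrite -EV coef_map.
have DE s : (fs s)`_n != 0 -> meval s D = (fs s)`_n * resultant (fs s) (fs s)^`().
  move=> fn; rewrite /D mevalM ms; congr (_ * _).
  have sF : size (fs s) = N.
    apply/eqP; rewrite eqn_leq sizeFs /= -(prednK NP); exact: coef_neq0_size.
  have sFm : size Fm = N.
    by apply/eqP; rewrite eqn_leq sizeFm /= -{1}sF -EV; apply: mapsize.
  have Fm0 : Fm != 0 by rewrite -size_poly_gt0 sFm.
  rewrite (@gen_map_resultant _ _ (meval s)) ?EV -?deriv_map ?EV ?sF ?sFm //.
  apply/eqP; rewrite eqn_leq; apply/andP; split; first by rewrite -EV deriv_map; apply: mapsize.
  have : (size Fm^`() <= n)%N by rewrite -ltnS /n prednK // -sFm lt_size_deriv.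
  move/leq_trans; apply.
  case En : n => [|m] //; apply: coef_neq0_size.
  by rewrite coef_deriv -En mulrn_eq0 negb_or En /= -En fn.
exists (fun s => meval s D != 0); split.
  exists [:: D]; split.
    exists t; rewrite /in_alg_set => H; have := H D (mem_head _ _); apply/eqP.
    rewrite DE // mulf_neq0 // resultant_eq0 -leqNgt.
    rewrite leqNgt; apply/negP => gt1.
    have : size (gcdp (fs t) (fs t)^`()) != 1 by rewrite neq_ltn gt1 orbT.
    case/closed_rootP => x rx.
    have r1 := root_dvdp (dvdp_gcdl _ _) rx; have r2 := root_dvdp (dvdp_gcdr _ _) rx.
    have d2 : ('X - x%:P) ^+ 2 %| fs t by rewrite dvd2_root r1 r2.
    have dg : ('X - x%:P) ^+ 2 %| gcd_family p by apply: dvdp_gcd_family; apply: Ht1 d2.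
    have rg : root (gcd_family p) x.
      by rewrite -dvdp_XsubCl; apply: dvdp_trans dg; rewrite expr2 dvdp_mulr ?dvdpp.
    by move: dg; rewrite -mup_geq // gs.
  by move=> s Hs f; rewrite inE => /eqP ->; apply/eqP/negPn/negP; exact: Hs.
move=> s Hs.
have fn : (fs s)`_n != 0.
  by apply: contraTneq Hs => E; rewrite negbK /D mevalM ms E mul0r.
have := Hs; rewrite DE // mulf_eq0 negb_or => /andP[_ rn].
have f0 : fs s != 0 by apply: contraNneq fn => ->; rewrite coef0.
apply: simple_coprime => //.
by rewrite /coprimep eqn_leq leqNgt -resultant_eq0 rn size_poly_gt0 gcdp_eq0 negb_and f0.
Qed.

End Pencil.

Theorem lemmaA1 (R : realType) (k : nat) (p : 'I_k -> {poly R[i]}) :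
  simple_roots (gcd_family p) ->
  exists Omega : ('I_k -> R[i]) -> Prop,
    generic Omega /\
    forall s : 'I_k -> R[i], Omega s -> simple_roots (\sum_(j < k) s j *: p j).
Proof. exact: main_gen. Qed.
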